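(* Let $M$ be a metric space with metric $d$, let $s\in M$ and let $r>1$. For $n\in\mathbb{Z}$ let $M_n=\{s\}\cup\{p\in M : d(s,p)\in[r^n,r^{n+1})\}$ (with the restricted metric). If for each $n\in\mathbb{Z}$ the infinite server problem on $(M_n,s)$ admits a strictly $\rho$-competitive online algorithm, then the infinite server problem on $(M,s)$ admits a strictly $\frac{4r-1}{r-1}\rho$-competitive online algorithm.
   Context: Infinite server problem on $(M,s)$: $M$ is a metric space and $s\in M$ the source; an unbounded number of servers initially reside at $s$. A finite sequence of requests (points of $M$) is revealed one by one; each must be served immediately, without knowledge of future requests, by moving some server to it; the cost is the total distance traveled. An online algorithm $ALG$ is strictly $\rho$-competitive if $ALG(\sigma)\le\rho\,OPT(\sigma)$ for every request sequence $\sigma$, where $OPT(\sigma)$ is the optimal offline cost. *)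

(* Defs.v *)
From mathcomp Require Import all_boot all_order all_algebra.
From mathcomp Require Import boolp classical_sets reals.
Set Implicit Arguments. Unset Strict Implicit. Unset Printing Implicit Defensive.
Import Order.TTheory GRing.Theory Num.Theory.
Local Open Scope ring_scope.
Local Open Scope classical_set_scope.

Section InfServer.
Variables (R : realType) (T : Type).

Definition is_metric (d : T -> T -> R) : Prop :=
  (forall x y, 0 <= d x y) /\ (forall x y, d x y = 0 <-> x = y) /\
  (forall x y, d x y = d y x) /\ (forall x y z, d x z <= d x y + d y z).

Definition config := nat -> T.

Definition init_config (s : T) : config := fun _ => s.

Definition move (c : config) (i : nat) (p : T) : config :=
  fun j => if j == i then p else c j.

Fixpoint serve (d : T -> T -> R) (choice : nat -> nat) (c : config) (sigma : seq T)
  : R :=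
  match sigma with
  | [::] => 0
  | p :: rest =>
      d (c (choice 0%N)) p + serve d (fun k => choice k.+1) (move c (choice 0%N) p) rest
  end.

(* A deterministic online algorithm: given the requests revealed so far
   (the last one being the current request), it chooses which server to move. *)
Definition online_alg := seq T -> nat.

Definition ALG_cost (d : T -> T -> R) (s : T) (alg : online_alg) (sigma : seq T) : R :=
  serve d (fun k => alg (take k.+1 sigma)) (init_config s) sigma.

Definition OPT_cost (d : T -> T -> R) (s : T) (sigma : seq T) : R :=
  inf (range (fun f : nat -> nat => serve d f (init_config s) sigma)).

Definition strictly_competitive (d : T -> T -> R) (s : T) (alg : online_alg) (rho : R)
  : Prop :=
  forall sigma : seq T, ALG_cost d s alg sigma <= rho * OPT_cost d s sigma.

Definition admits_strictly_competitive (d : T -> T -> R) (s : T) (rho : R) : Prop :=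
  exists alg : online_alg, strictly_competitive d s alg rho.

End InfServer.

Definition ring_pt {R : realType} {T : Type} (d : T -> T -> R) (s : T) (r : R) (n : int)
  (p : T) : Prop :=
  p = s \/ (r ^ n <= d s p /\ d s p < r ^ (n + 1)).

Definition Msub {R : realType} {T : Type} (d : T -> T -> R) (s : T) (r : R) (n : int) :=
  {p : T | ring_pt d s r n p}.

Definition Msub_dist {R : realType} {T : Type} (d : T -> T -> R) (s : T) (r : R) (n : int)
  : Msub d s r n -> Msub d s r n -> R :=
  fun x y => d (proj1_sig x) (proj1_sig y).

Definition Msub_src {R : realType} {T : Type} (d : T -> T -> R) (s : T) (r : R) (n : int)
  : Msub d s r n := exist _ s (or_introl erefl).

Arguments Msub_dist {R T} d s r n.
Arguments Msub_src {R T} d s r n.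
Arguments Msub {R T} d s r n.
Arguments ring_pt {R T} d s r n p.

(* Main.v *)
Require Import Defs.
From mathcomp Require Import all_boot all_order all_algebra.
From mathcomp Require Import zify.
From mathcomp Require Import boolp classical_sets reals.
From mathcomp Require Import ring lra.
Import Order.TTheory GRing.Theory Num.Theory.
Local Open Scope ring_scope.
Set Implicit Arguments. Unset Strict Implicit. Unset Printing Implicit Defensive.


Section Generic.
Variables (R : realType) (U : Type) (dU : U -> U -> R).

Fixpoint cfg (f : nat -> nat) (c : config U) (t : seq U) : config U :=
  match t with
  | [::] => c
  | p :: rest => cfg (fun k => f k.+1) (move c (f 0%N) p) rest
  end.

Lemma serve_rcons f c t x :
  serve dU f c (rcons t x) = serve dU f c t + dU (cfg f c t (f (size t))) x.
Proof.
elim: t f c => [|p t IH] f c /=; first by rewrite !add0r addr0.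
by rewrite IH addrA.
Qed.

Lemma cfg_rcons f c t x :
  cfg f c (rcons t x) = move (cfg f c t) (f (size t)) x.
Proof. by elim: t f c => [|p t IH] f c //=. Qed.

Lemma serve_ext f g c t : (forall k, (k < size t)%N -> f k = g k) ->
  serve dU f c t = serve dU g c t.
Proof.
elim: t f g c => [|p t IH] f g c //= H.
rewrite (H 0%N) //; congr (_ + _); apply: IH => k Hk; exact: H.
Qed.

Lemma cfg_ext f g c t : (forall k, (k < size t)%N -> f k = g k) ->
  cfg f c t = cfg g c t.
Proof.
elim: t f g c => [|p t IH] f g c //= H.
rewrite (H 0%N) //; apply: IH => k Hk; exact: H.
Qed.

Hypothesis dU_ge0 : forall x y, 0 <= dU x y.

Lemma serve_ge0 f c t : 0 <= serve dU f c t.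
Proof. elim: t f c => [|p t IH] f c //=; by rewrite addr_ge0. Qed.

Definition reach (s0 : U) t c C :=
  exists f, serve dU f (init_config s0) t = C /\ cfg f (init_config s0) t = c.

Lemma reach_nil s0 : reach s0 [::] (init_config s0) 0.
Proof. by exists (fun _ => 0%N). Qed.

Lemma reach_rcons s0 t c C i x : reach s0 t c C ->
  reach s0 (rcons t x) (move c i x) (C + dU (c i) x).
Proof.
move=> [f [Hs Hc]].
exists (fun k => if k == size t then i else f k).
have E : forall k, (k < size t)%N -> (if k == size t then i else f k) = f k.
  by move=> k Hk; rewrite ifN // neq_ltn Hk.
rewrite serve_rcons cfg_rcons eqxx (serve_ext _ E) (cfg_ext _ E) Hs Hc.
by [].
Qed.

Lemma OPT_le_reach s0 t c C : reach s0 t c C -> OPT_cost dU s0 t <= C.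
Proof.
move=> [f [Hs _]]; rewrite /OPT_cost.
have H : has_lbound (range (fun f : nat -> nat => serve dU f (init_config s0) t)).
  by exists 0 => y [g _ <-]; exact: serve_ge0.
by apply: (ge_inf H); exists f.
Qed.

Lemma OPT_ge m s0 t : (forall f, m <= serve dU f (init_config s0) t) ->
  m <= OPT_cost dU s0 t.
Proof.
move=> H; apply: lb_le_inf; first by exists (serve dU (fun _ => 0%N) (init_config s0) t), (fun _ => 0%N).
by move=> y [g _ <-].
Qed.

Lemma OPT_ge0 s0 t : 0 <= OPT_cost dU s0 t.
Proof. by apply: OPT_ge => f; exact: serve_ge0. Qed.

Definition acfg (s0 : U) (alg : online_alg U) t :=
  cfg (fun k => alg (take k.+1 t)) (init_config s0) t.

Lemma ALG_rcons s0 alg t x :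
  ALG_cost dU s0 alg (rcons t x) =
  ALG_cost dU s0 alg t + dU (acfg s0 alg t (alg (rcons t x))) x.
Proof.
rewrite /ALG_cost serve_rcons.
have E : forall k, (k < size t)%N ->
   alg (take k.+1 (rcons t x)) = alg (take k.+1 t).
  by move=> k Hk; rewrite -cats1 takel_cat.
rewrite (serve_ext _ E) /acfg (cfg_ext _ E).
by rewrite take_oversize // size_rcons.
Qed.

Lemma acfg_rcons s0 alg t x :
  acfg s0 alg (rcons t x) = move (acfg s0 alg t) (alg (rcons t x)) x.
Proof.
rewrite /acfg cfg_rcons.
have E : forall k, (k < size t)%N ->
   alg (take k.+1 (rcons t x)) = alg (take k.+1 t).
  by move=> k Hk; rewrite -cats1 takel_cat.
by rewrite (cfg_ext _ E) take_oversize // size_rcons.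
Qed.

End Generic.

Section Core.
Variables (R : realType) (T : Type) (d : T -> T -> R) (s : T) (r : R).
Hypothesis dm : is_metric d.
Hypothesis r1 : 1 < r.

Let d_ge0 x y : 0 <= d x y. Proof. by case: dm. Qed.
Let d_xx x : d x x = 0. Proof. by case: dm => _ [H _]; apply: (proj2 (H x x)). Qed.
Let d_sym x y : d x y = d y x. Proof. by case: dm => _ [_ [H _]]. Qed.
Let d_tri x y z : d x z <= d x y + d y z. Proof. by case: dm => _ [_ [_ H]]. Qed.
Let d_eq0 x y : d x y = 0 -> x = y. Proof. by case: dm => _ [H _]; apply: (proj1 (H x y)). Qed.

Definition rho x := d s x.
Definition P (n : int) := r ^ n.
Definition aa := (r - 1)^-1.
Definition bb := r / (r - 1).
Definition gf (n : int) x :=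
  aa * Num.max 0 (P n - rho x) + bb * Num.max 0 (rho x - P (n + 1)).
Definition psi (n : int) x y := Num.max 0 (Num.min (d x y) (rho x) - gf n x).

Lemma P_gt0 n : 0 < P n. Proof. by apply: exprz_gt0; have := r1; lra. Qed.
Lemma P_S n : P (n + 1) = P n * r.
Proof. by rewrite /P expfzDr ?expr1z //; apply/eqP => H; move: r1; rewrite H; lra. Qed.
Lemma P_le n k : (n <= k)%R -> P n <= P k.
Proof. by move=> H; rewrite /P ler_eXz2l. Qed.
Lemma P_lt n k : (n < k)%R -> P n < P k.
Proof. by move=> H; rewrite /P ltr_eXz2l. Qed.

Lemma aa_gt0 : 0 < aa. Proof. by rewrite /aa invr_gt0; have := r1; lra. Qed.
Lemma bbE : bb = 1 + aa.
Proof. rewrite /bb /aa; field; apply/eqP => H; move: r1; lra. Qed.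
Lemma aarE : aa * r = bb.
Proof. rewrite /bb /aa; field; apply/eqP => H; move: r1; lra. Qed.

Lemma rho_lip x p : rho p <= rho x + d x p /\ rho x <= rho p + d x p.
Proof. rewrite /rho; split; [exact: d_tri | rewrite (d_sym x p); exact: d_tri]. Qed.

Lemma gf_ge0 n x : 0 <= gf n x.
Proof.
rewrite /gf addr_ge0 // mulr_ge0 ?le_max ?lexx //.
- exact: ltW aa_gt0.
- rewrite bbE; have := aa_gt0; lra.
Qed.

Lemma psi_ge0 n x y : 0 <= psi n x y.
Proof. by rewrite /psi le_max lexx. Qed.
Lemma psi_ge n x y : Num.min (d x y) (rho x) - gf n x <= psi n x y.
Proof. by rewrite /psi le_max lexx orbT. Qed.
Lemma psi_le n x y U : 0 <= U -> Num.min (d x y) (rho x) - gf n x <= U -> psi n x y <= U.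
Proof. by move=> H1 H2; rewrite /psi ge_max H1 H2. Qed.

Lemma min_le2 (a b : R) : Num.min a b <= a /\ Num.min a b <= b.
Proof. by rewrite !ge_min !lexx orbT. Qed.

Lemma minD (a b c e del : R) : a <= c + del -> b <= e + del ->
  Num.min a b <= Num.min c e + del.
Proof.
move=> H1 H2; case: (leP c e) => H.
- by rewrite ge_min H1.
- by rewrite ge_min H2 orbT.
Qed.

Lemma Mlip x p y : Num.min (d p y) (rho p) <= Num.min (d x y) (rho x) + d x p.
Proof.
have [H1 H2] := rho_lip x p.
have H3 : d p y <= d x y + d x p by have := d_tri p x y; rewrite (d_sym p x); lra.
exact: minD.
Qed.

Lemma M_ge0 x y : 0 <= Num.min (d x y) (rho x).
Proof. by rewrite le_min /rho !d_ge0. Qed.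


Lemma max0_pos (t : R) : 0 <= t -> Num.max 0 t = t.
Proof. by move=> H; case: (leP 0 t) => H' //; apply/eqP; rewrite eq_le; apply/andP; split; lra. Qed.
Lemma max0_neg (t : R) : t <= 0 -> Num.max 0 t = 0.
Proof. by move=> H; case: (leP 0 t) => H' //; apply/eqP; rewrite eq_le; apply/andP; split; lra. Qed.
Lemma mx_le (u U : R) : u <= U -> 0 <= U -> Num.max 0 u <= U.
Proof. by move=> H1 H2; rewrite ge_max H1 H2. Qed.
Lemma mx_ge (u : R) : u <= Num.max 0 u /\ 0 <= Num.max 0 u.
Proof. by split; rewrite le_max lexx ?orbT. Qed.

Lemma bernoulli (N : nat) : 1 + N%:R * (r - 1) <= r ^+ N.
Proof.
elim: N => [|N IH]; first by rewrite mul0r addr0 expr0.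
rewrite exprS -natr1.
have H0 : 0 <= N%:R * (r - 1) :> R by apply: mulr_ge0 => //; have := r1; lra.
have H1 : 1 + N%:R * (r - 1) <= r ^+ N := IH.
have H2 : r * (1 + N%:R * (r - 1)) <= r * r ^+ N by apply: ler_wpM2l => //; have := r1; lra.
have H3 : 0 <= N%:R * (r - 1) * (r - 1) :> R by rewrite mulr_ge0 // ?H0 //; have := r1; lra.
lra.
Qed.

Lemma big_pow (v : R) : exists N : nat, v < r ^+ N.
Proof.
have hr : 0 < r - 1 by have := r1; lra.
have H := archi_boundP (divr_ge0 (normr_ge0 v) (ltW hr)).
exists (Num.Def.archi_bound (`|v| / (r - 1))).
move: H; set N := Num.Def.archi_bound _ => H.
have B := bernoulli N.
rewrite ltr_pdivrMr // in H.
have := ler_norm v; lra.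
Qed.

Lemma ring_exists (v : R) : 0 < v -> exists n : int, P n <= v < P (n + 1).
Proof.
move=> v0.
have [N1 H1] := big_pow v.
have [N2 H2] := big_pow (v^-1).
have H2' : P (- (N2%:Z)) < v.
  rewrite /P -invr_expz.
  have hp : 0 < r ^ N2%:Z by apply: exprz_gt0; have := r1; lra.
  rewrite -(invrK v) ltf_pV2 ?posrE ?invr_gt0 //.
have key : forall j : nat, v < P (j%:Z - N2%:Z) -> exists n : int, P n <= v < P (n + 1).
  elim=> [|j IH] Hj.
    by move: Hj; rewrite sub0r => Hj; exfalso; lra.
  case: (leP (P (j%:Z - N2%:Z)) v) => Hc.
    exists (j%:Z - N2%:Z); rewrite Hc /=.
    by have -> : j%:Z - N2%:Z + 1 = j.+1%:Z - N2%:Z by lia.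
  exact: IH.
apply: (key (N1 + N2)%N).
by have -> : (N1 + N2)%N%:Z - N2%:Z = N1%:Z by lia.
Qed.

Definition ringof (x : T) : int :=
  match pselect (exists n : int, P n <= rho x < P (n + 1)) with
  | left H => projT1 (cid H)
  | right _ => 0
  end.

Lemma rho_gt0 x : x <> s -> 0 < rho x.
Proof.
move=> H; rewrite /rho lt_neqAle d_ge0 andbT eq_sym; apply/eqP => E.
by apply: H; symmetry; apply: d_eq0.
Qed.

Lemma ringof_spec x : x <> s -> P (ringof x) <= rho x < P (ringof x + 1).
Proof.
move=> H; rewrite /ringof; case: pselect => [E|NE].
  by case: (cid E).
by exfalso; apply: NE; apply: ring_exists; apply: rho_gt0.
Qed.

Lemma ring_uniq (n k : int) (v : R) : P n <= v < P (n + 1) -> P k <= v < P (k + 1) -> n = k.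
Proof.
move=> /andP [H1 H2] /andP [H3 H4].
have A : n < k + 1 by rewrite -(ltr_eXz2l r1); apply: le_lt_trans H4.
have B : k < n + 1 by rewrite -(ltr_eXz2l r1); apply: le_lt_trans H2.
lia.
Qed.


Definition Phi z (Y : int -> T) :=
  psi (ringof z - 1) z (Y (ringof z - 1)) + psi (ringof z) z (Y (ringof z))
  + psi (ringof z + 1) z (Y (ringof z + 1)).
Definition CC := 4 + 3 * aa.

Lemma aaP n : aa * P (n + 1) = bb * P n.
Proof. by rewrite P_S mulrC -mulrA (mulrC r) aarE mulrC. Qed.

Section AtZ.
Variable z : T.
Hypothesis zs : z <> s.
Let a := ringof z.
Let Hz : P a <= rho z < P (a + 1) := ringof_spec zs.

Lemma gf_0 : gf a z = 0.
Proof.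
move/andP: Hz => [H1 H2].
have H3 : P (a + 1) < P (a + 1 + 1) by apply: P_lt; lia.
by rewrite /gf max0_neg ?max0_neg ?mulr0 ?addr0 //; lra.
Qed.

Lemma gf_up : gf (a + 1) z = aa * (P (a + 1) - rho z).
Proof.
move/andP: Hz => [H1 H2].
have H3 : P (a + 1) < P (a + 1 + 1) by apply: P_lt; lia.
by rewrite /gf (max0_pos (t := P (a + 1) - rho z)) ?max0_neg ?mulr0 ?addr0 //; lra.
Qed.

Lemma gf_dn : gf (a - 1) z = bb * (rho z - P a).
Proof.
move/andP: Hz => [H1 H2].
have H3 : P (a - 1) < P a by apply: P_lt; lia.
rewrite /gf; have -> : a - 1 + 1 = a by lia.
by rewrite (max0_neg (t := P (a - 1) - rho z)) ?max0_pos ?mulr0 ?add0r //; lra.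
Qed.

Lemma psi_up_z y : psi (a + 1) z y <= bb * (rho z - P a).
Proof.
move/andP: Hz => [H1 H2].
have [_ M2] := min_le2 (d z y) (rho z).
have E := aaP a. have A := aa_gt0. rewrite bbE in E *.
apply: psi_le; last by rewrite gf_up; lra.
by apply: mulr_ge0; lra.
Qed.

Lemma psi_dn_z y : psi (a - 1) z y <= aa * (P (a + 1) - rho z).
Proof.
move/andP: Hz => [H1 H2].
have [_ M2] := min_le2 (d z y) (rho z).
have E := aaP a. have A := aa_gt0. rewrite bbE in E *.
apply: psi_le; last by rewrite gf_dn bbE; lra.
by apply: mulr_ge0; lra.
Qed.

End AtZ.

Lemma psi_self n p : psi n p p = 0.
Proof.
apply/eqP; rewrite eq_le psi_ge0 andbT; apply: psi_le => //.
have [M1 _] := min_le2 (d p p) (rho p); have E := d_xx p.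
have := gf_ge0 n p; lra.
Qed.

Lemma psi_le_rho n z y : psi n z y <= rho z.
Proof.
apply: psi_le; first by rewrite /rho d_ge0.
have [_ M2] := min_le2 (d z y) (rho z); have := gf_ge0 n z; lra.
Qed.

Lemma Phi_ge0 z Y : 0 <= Phi z Y.
Proof. by rewrite /Phi !addr_ge0 ?psi_ge0. Qed.

Lemma psi_s n y : psi n s y = 0.
Proof.
  apply/eqP; rewrite eq_le psi_ge0 andbT; apply: psi_le => //.
  have [_ M2] := min_le2 (d s y) (rho s); have E : rho s = 0 := d_xx s.
  have := gf_ge0 n s; lra.
Qed.

Lemma Phi_s Y : Phi s Y = 0.
Proof. by rewrite /Phi !psi_s !addr0. Qed.

Lemma CCE : (4 * r - 1) / (r - 1) = CC.
Proof. rewrite /CC /aa; field; apply/eqP => H; move: r1; lra. Qed.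


Lemma neq_int (m k : int) : m != k -> (m == k) = false.
Proof. by move/negbTE. Qed.

Lemma mulP (c u v : R) : 0 <= c -> u <= v -> c * u <= c * v.
Proof. by move=> H1 H2; apply: ler_wpM2l. Qed.

Lemma arith_eq0 (del t : R) : -del <= t -> t <= del ->
  del + Num.max 0 (del + aa * t) + Num.max 0 (del + bb * (- t)) <= CC * del.
Proof.
move=> H1 H2; have A := aa_gt0; rewrite /CC bbE.
have D0 : 0 <= del by lra.
have AD : 0 <= aa * del by apply: mulr_ge0; lra.
case: (leP 0 t) => Ht.
- have B1 : Num.max 0 (del + aa * t) <= del + aa * del.
    by apply: mx_le; [have := mulP (ltW A) H2; lra | lra].
  have B2 : Num.max 0 (del + (1 + aa) * - t) <= del.
    apply: mx_le => //; have : 0 <= (1 + aa) * t by apply: mulr_ge0; lra.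
    lra.
  lra.
- have B1 : Num.max 0 (del + aa * t) <= del.
    apply: mx_le => //; have : aa * t <= 0 by apply: mulr_ge0_le0; lra.
    lra.
  have B2 : Num.max 0 (del + (1 + aa) * - t) <= del + (1 + aa) * del.
    apply: mx_le; last by lra.
    have : (1 + aa) * - t <= (1 + aa) * del by apply: mulP; lra.
    lra.
  lra.
Qed.

Lemma Glip n x p y : psi n p y <= psi n x y + Num.max 0 (d x p + (gf n x - gf n p)).
Proof.
have [H1 H2] := mx_ge (d x p + (gf n x - gf n p)).
have H3 := psi_ge0 n x y.
apply: psi_le; first by lra.
have := psi_ge n x y; have := Mlip x p y; lra.
Qed.

Lemma Pa_lip x p y : x <> s -> psi (ringof x) p y <= psi (ringof x) x y + d x p.
Proof.
move=> xs; have H3 := psi_ge0 (ringof x) x y.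
apply: psi_le; first by have := d_ge0 x p; lra.
have := Mlip x p y; have := psi_ge (ringof x) x y; have := gf_ge0 (ringof x) p; rewrite gf_0 //; lra.
Qed.

Lemma arith0 (pay M del x0 pm xm pp xp u v C : R) :
  pay <= M + del -> M <= x0 -> pm <= xm + u -> pp <= xp + v -> del + v + u <= C ->
  pay + (pm + pp) <= xm + x0 + xp + C.
Proof. lra. Qed.

Lemma arith1 (pay M del g x0 pa xm pp xp w C : R) :
  pay <= M + del -> M - g <= xp -> pa <= x0 + del -> pp <= w -> 0 <= xm ->
  2 * del + w + g <= C -> pay + (pa + pp) <= xm + x0 + xp + C.
Proof. lra. Qed.

Lemma arith2 (pay M del g x0 pa xm pp xp w C : R) :
  pay <= M + del -> M - g <= xm -> pa <= x0 + del -> pp <= w -> 0 <= xp ->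
  2 * del + w + g <= C -> pay + (pp + pa) <= xm + x0 + xp + C.
Proof. lra. Qed.

Lemma arith3 (pay rp pm pp X C : R) :
  pay + pm + pp <= 2 * rp -> 0 <= X -> 2 * rp <= C -> pay + (pm + pp) <= X + C.
Proof. lra. Qed.

Lemma arS (pay rp pm pp c Pm Pm1 : R) : pay <= rp -> pp <= (1 + c) * (rp - Pm) ->
  pm <= c * (Pm1 - rp) -> c * Pm1 = (1 + c) * Pm -> pay + pm + pp <= 2 * rp.
Proof. lra. Qed.

Lemma arX (pay rp pm pp c : R) : 0 <= rp -> pay <= rp -> pm <= rp -> pp <= rp ->
  0 <= c * rp -> pay + (pm + pp) <= (4 + 3 * c) * rp.
Proof. lra. Qed.

Lemma arC1 (c del u v : R) : 0 <= del -> (1 + c) * u <= (1 + c) * del -> c * v <= c * del -> 0 <= c * del ->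
  2 * del + (1 + c) * u + c * v <= (4 + 3 * c) * del.
Proof. lra. Qed.

Lemma arC2 (c del u v : R) : 0 <= del -> (1 + c) * u <= (1 + c) * del -> c * v <= c * del -> 0 <= c * del ->
  2 * del + c * v + (1 + c) * u <= (4 + 3 * c) * del.
Proof. lra. Qed.

Lemma arJ1 (c Pa1 Pm1 Pm rp rx del : R) : 0 <= Pm1 ->
  Pa1 <= Pm1 -> c * Pm = (1 + c) * Pm1 -> Pm1 <= Pm -> c * Pm <= c * rp ->
  c * (rp - Pm1) <= c * del -> Pm <= rp -> rx < Pa1 -> rp <= rx + del ->
  2 * rp <= (4 + 3 * c) * del.
Proof. lra. Qed.

Lemma arJ2 (c Pm2 Pa Pm1 rp rx del : R) :
  Pm2 <= Pa -> c * Pm2 = (1 + c) * Pm1 -> Pm1 <= Pm2 -> c * rp <= c * Pm1 ->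
  c * (Pm2 - rp) <= c * del -> rp < Pm1 -> Pa <= rx -> rx <= rp + del -> 0 <= rp ->
  2 * rp <= (4 + 3 * c) * del.
Proof. lra. Qed.

Lemma arT1 (del rp rx : R) : rx <= rp + del -> - del <= rp - rx.
Proof. lra. Qed.
Lemma arT2 (del rp rx : R) : rp <= rx + del -> rp - rx <= del.
Proof. lra. Qed.

Lemma arT3 (rp Pq rx del : R) : rx < Pq -> rp <= rx + del -> rp - Pq <= del.
Proof. lra. Qed.
Lemma arT4 (rp Pq rx del : R) : Pq <= rp -> rp <= rx + del -> Pq - rx <= del.
Proof. lra. Qed.

Lemma iz1 (a m : int) : a + 2 <= m -> a + 1 <= m - 1. Proof. lia. Qed.
Lemma iz2 (m : int) : m - 1 <= m. Proof. lia. Qed.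
Lemma iz3 (a m : int) : m < a + 2 -> m != a -> m != a + 1 -> m != a - 1 -> m <= a - 2.
Proof. move=> H1 /eqP H2 /eqP H3 /eqP H4; lia. Qed.
Lemma iz4 (a m : int) : m <= a - 2 -> m + 2 <= a. Proof. lia. Qed.
Lemma iz5 (m : int) : m + 1 <= m + 2. Proof. lia. Qed.

Lemma core x p (Y : int -> T) : p <> s ->
  Num.min (d (Y (ringof p)) p) (rho p) + Phi p (fun n => if n == ringof p then p else Y n)
  <= Phi x Y + CC * d x p.
Proof.
move=> ps; rewrite /Phi.
set m := ringof p; set del := d x p.
rewrite (neq_int (m := m - 1) (k := m)); last by apply/eqP; lia.
rewrite (neq_int (m := m + 1) (k := m)); last by apply/eqP; lia.
rewrite eqxx psi_self addr0 (d_sym (Y m) p).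
have /andP [Hp1 Hp2] := ringof_spec ps; rewrite -/m in Hp1 Hp2.
have [L1 L2] := rho_lip x p; rewrite -/del in L1 L2.
have D0 : 0 <= del by exact: d_ge0.
have A := aa_gt0.
have AD : 0 <= aa * del by apply: mulr_ge0 => //; exact: ltW.
have Bp : 0 <= bb by rewrite bbE; apply: addr_ge0 => //; exact: ltW.
have Pay1 : Num.min (d p (Y m)) (rho p) <= rho p by have [] := min_le2 (d p (Y m)) (rho p).
have Pay2 := Mlip x p (Y m); rewrite -/del in Pay2.
have Up := psi_up_z ps (Y (m + 1)); rewrite -/m in Up.
have Dn := psi_dn_z ps (Y (m - 1)); rewrite -/m in Dn.
have E := aaP m.
have B := bbE.
have Sum : Num.min (d p (Y m)) (rho p) + psi (m - 1) p (Y (m - 1)) + psi (m + 1) p (Y (m + 1))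
    <= 2 * rho p.
  rewrite bbE in Up E; exact: (arS Pay1 Up Dn E).
case: (pselect (x = s)) => [xs|xs].
  subst x; rewrite !psi_s /CC.
  have R0 : rho s = 0 := d_xx s.
  have U1 := psi_le_rho (m - 1) p (Y (m - 1)).
  have U2 := psi_le_rho (m + 1) p (Y (m + 1)).
  have Ed : del = rho p by [].
  have Ar : 0 <= aa * rho p by apply: mulr_ge0; [exact: ltW | exact: d_ge0].
  rewrite !add0r; exact: (arX (d_ge0 s p) Pay1 U1 U2 Ar).
have /andP [Hx1 Hx2] := ringof_spec xs.
set a := ringof x in Hx1 Hx2 *.
have Ex0 := gf_0 xs; rewrite -/a in Ex0.
have Exu := gf_up xs; rewrite -/a in Exu.
have Exd := gf_dn xs; rewrite -/a in Exd.
have Ep0 := gf_0 ps; rewrite -/m in Ep0.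
have Epu := gf_up ps; rewrite -/m in Epu.
have Epd := gf_dn ps; rewrite -/m in Epd.
have Px0 : forall n, 0 <= psi n x (Y n) by move=> n; exact: psi_ge0.
have Pa := Pa_lip p (Y a) xs; rewrite -/a -/del in Pa.
case: (eqVneq m a) => [Ema|Nma].
  rewrite Ema in Pay2 Epu Epd *.
  have G1 := Glip (a + 1) x p (Y (a + 1)); rewrite Exu Epu -/del in G1.
  have G2 := Glip (a - 1) x p (Y (a - 1)); rewrite Exd Epd -/del in G2.
  have P0 := psi_ge a x (Y a); rewrite Ex0 subr0 in P0.
  rewrite (_ : aa * (P (a + 1) - rho x) - aa * (P (a + 1) - rho p) = aa * (rho p - rho x)) in G1; last by ring.
  rewrite (_ : bb * (rho x - P a) - bb * (rho p - P a) = bb * (- (rho p - rho x))) in G2; last by ring.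
  have T1 : - del <= rho p - rho x by apply: arT1.
  have T2 : rho p - rho x <= del by apply: arT2.
  have K := arith_eq0 T1 T2; have K2 := arith0 Pay2 P0 G2 G1 K; exact K2.
case: (eqVneq m (a + 1)) => [Ema|Nma1].
  rewrite Ema in Pay2 Up Hp1 Hp2 *.
  rewrite addrK.
  have P1 := psi_ge (a + 1) x (Y (a + 1)); rewrite Exu in P1.
  have M1 : bb * (rho p - P (a + 1)) <= bb * del by apply: mulP; [exact: Bp | exact: arT3 Hx2 L1].
  have M2 : aa * (P (a + 1) - rho x) <= aa * del by apply: mulP; [exact: ltW | exact: arT4 Hp1 L1].
  apply: (arith1 Pay2 P1 Pa Up (Px0 (a - 1))).
  rewrite /CC; rewrite bbE in M1 *; exact: (arC1 D0 M1 M2 AD).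
case: (eqVneq m (a - 1)) => [Ema|Nma2].
  rewrite Ema in Pay2 Dn Hp1 Hp2 *.
  rewrite subrK in Dn Hp2 *.
  have P1 := psi_ge (a - 1) x (Y (a - 1)); rewrite Exd in P1.
  have M1 : bb * (rho x - P a) <= bb * del by apply: mulP; [exact: Bp | exact: arT3 Hp2 L2].
  have M2 : aa * (P a - rho p) <= aa * del by apply: mulP; [exact: ltW | exact: arT4 Hx1 L2].
  apply: (arith2 Pay2 P1 Pa Dn (Px0 (a + 1))).
  rewrite /CC; rewrite bbE in M1 *; exact: (arC2 D0 M1 M2 AD).
have PhiX : 0 <= psi (a - 1) x (Y (a - 1)) + psi a x (Y a) + psi (a + 1) x (Y (a + 1)).
  by rewrite !addr_ge0.
apply: (arith3 Sum PhiX).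
case: (lerP (a + 2) m) => Hm.
  have Q1 : P (a + 1) <= P (m - 1) by apply: P_le; exact: iz1.
  have Em1 := aaP (m - 1); rewrite subrK in Em1.
  have Qm : P (m - 1) <= P m by apply: P_le; exact: iz2.
  have M1 : aa * P m <= aa * rho p by apply: mulP; [exact: ltW | exact: Hp1].
  have M2 : aa * (rho p - P (m - 1)) <= aa * del by apply: mulP; [exact: ltW | exact: arT3 (lt_le_trans Hx2 Q1) L1].
  rewrite /CC; rewrite bbE in Em1; exact: (arJ1 (ltW (P_gt0 _)) Q1 Em1 Qm M1 M2 Hp1 Hx2 L1).
have Hm' : m <= a - 2 by exact: iz3.
have Q1 : P (m + 2) <= P a by apply: P_le; exact: iz4.
have Em1 := aaP (m + 1); rewrite -addrA in Em1.
have Qm : P (m + 1) <= P (m + 2) by apply: P_le; exact: iz5.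
have M1 : aa * rho p <= aa * P (m + 1) by apply: mulP; [exact: ltW | exact: ltW].
have M2 : aa * (P (m + 2) - rho p) <= aa * del by apply: mulP; [exact: ltW | exact: arT4 (le_trans Q1 Hx1) L2].
have R0 : 0 <= rho p by rewrite /rho d_ge0.
rewrite /CC; rewrite bbE in Em1; exact: (arJ2 Q1 Em1 Qm M1 M2 Hp2 Hx1 L2 R0).
Qed.

End Core.

Section Decomp.
Variables (R : realType) (T : Type) (d : T -> T -> R) (s : T) (r : R).
Hypothesis dm : is_metric d.
Hypothesis r1 : 1 < r.
Local Notation ring := (ringof d s r).
Local Notation MS n := (Msub d s r n).
Local Notation Md n := (Msub_dist d s r n).
Local Notation Ms n := (Msub_src d s r n).

Let d_xx x : d x x = 0. Proof. by case: dm => _ [H _]; apply: (proj2 (H x x)). Qed.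

Definition inring n x := x <> s /\ ring x = n.

Lemma inring_pt n x : inring n x -> ring_pt d s r n x.
Proof.
move=> [xs <-]; right.
by have /andP [H1 H2] := ringof_spec dm r1 xs; split.
Qed.

Definition sub_of n x : option (MS n) :=
  match pselect (inring n x) with
  | left H => Some (exist _ x (inring_pt H))
  | right _ => None
  end.

Definition filt n (t : seq T) := pmap (sub_of n) t.

Lemma filt_rcons n t x :
  filt n (rcons t x) = if sub_of n x is Some y then rcons (filt n t) y else filt n t.
Proof.
by rewrite /filt -cats1 pmap_cat /=; case: (sub_of n x) => [y|] /=; rewrite ?cats1 ?cats0.
Qed.

Lemma sub_of_s n : sub_of n s = None.
Proof. by rewrite /sub_of; case: pselect => // [[]]. Qed.

Lemma sub_of_val n x y : sub_of n x = Some y -> sval y = x /\ inring n x.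
Proof. by rewrite /sub_of; case: pselect => // H E; case: E => <-. Qed.

Lemma sub_of_ring x : x <> s -> exists y, sub_of (ring x) x = Some y.
Proof.
move=> xs; rewrite /sub_of; case: pselect => [H|H]; first by eexists.
by exfalso; apply: H.
Qed.

Lemma sub_of_other n x : n <> ring x -> sub_of n x = None.
Proof. move=> H; rewrite /sub_of; case: pselect => // H2; exfalso; apply: H; by case: H2. Qed.

Lemma pickle_eq (A : countType) (a b : A) : (pickle a == pickle b) = (a == b).
Proof. exact: (inj_eq (pcan_inj pickleK)). Qed.

Variable algs : forall n : int, online_alg (MS n).

Definition code (u : (int * nat + nat)%type) : nat := pickle u.

Definition comb (h : seq T) : nat :=
  let x := last s h in
  match pselect (x = s) with
  | left _ => code (inr (size h))
  | right _ => code (inl (ring x, @algs (ring x) (filt (ring x) h)))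
  end.

Lemma comb_s t : comb (rcons t s) = code (inr (size t).+1).
Proof. by rewrite /comb last_rcons size_rcons; case: pselect. Qed.

Lemma comb_x t x : x <> s ->
  comb (rcons t x) = code (inl (ring x, @algs (ring x) (filt (ring x) (rcons t x)))).
Proof. by move=> xs; rewrite /comb last_rcons; case: pselect. Qed.

Lemma decomp (L : seq int) : uniq L -> forall t, (forall n, n \notin L -> filt n t = [::]) ->
  [/\ (forall n j, acfg s comb t (code (inl (n, j))) = sval (acfg (Ms n) (@algs n) (filt n t) j)),
      (forall k, (size t < k)%N -> acfg s comb t (code (inr k)) = s) &
      ALG_cost d s comb t = \sum_(n <- L) ALG_cost (Md n) (Ms n) (@algs n) (filt n t)].
Proof.
move=> UL; elim/last_ind => [|t x IH] HL.
  split => //; by rewrite /ALG_cost /= big1.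
have HL' : forall n, n \notin L -> filt n t = [::].
  move=> n nL; have := HL n nL; rewrite filt_rcons.
  by case: (sub_of n x) => [y|] // E; have := congr1 size E; rewrite size_rcons.
have [I1 I2 I3] := IH HL'.
rewrite ALG_rcons acfg_rcons.
case: (pselect (x = s)) => [xs|xs].
  subst x; rewrite comb_s.
  have Ef n : filt n (rcons t s) = filt n t by rewrite filt_rcons sub_of_s.
  split.
  - move=> n j; rewrite /move Ef pickle_eq /=; exact: I1.
  - move=> k; rewrite size_rcons => Hk; rewrite /move /code pickle_eq.
    have -> : (inr k == inr (size t).+1 :> (int * nat + nat)%type) = false.
      by apply/negbTE; apply/eqP => [[E]]; move: Hk; rewrite E ltnn.
    by apply: I2; apply: ltn_trans Hk.
  - rewrite (I2 (size t).+1) // d_xx addr0 I3.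
    by apply: eq_bigr => n _; rewrite Ef.
have [y Ey] := sub_of_ring xs.
have [Evy _] := sub_of_val Ey.
rewrite comb_x // filt_rcons Ey.
set jj := @algs (ring x) (rcons (filt (ring x) t) y).
split.
- move=> n j; rewrite /move /code pickle_eq.
  case E: (sub_of n x) => [y'|].
    have [Ev [_ En]] := sub_of_val E; subst n.
    rewrite filt_rcons Ey acfg_rcons /move.
    case: (eqVneq j jj) => [->|Nj]; first by rewrite eqxx Evy.
    have -> : (inl (ring x, j) == inl (ring x, jj) :> (int * nat + nat)%type) = false.
      by apply/negbTE; apply/eqP => [[E2]]; move/eqP: Nj; rewrite E2.
    exact: I1.
  have Nn : n != ring x.
    apply/eqP => En; move: E; rewrite En Ey //.
  have -> : (inl (n, j) == inl (ring x, jj) :> (int * nat + nat)%type) = false.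
    by apply/negbTE; apply/eqP => [[E2]]; move/eqP: Nn; rewrite E2.
  by rewrite filt_rcons E; exact: I1.
- move=> k; rewrite size_rcons => Hk; rewrite /move /code pickle_eq /=.
  by apply: I2; apply: ltn_trans Hk.
- have mL : ring x \in L.
    apply/negPn/negP => nL; have := HL _ nL; rewrite filt_rcons Ey.
    by move=> E; have := congr1 size E; rewrite size_rcons.
  rewrite (I1 (ring x) jj) I3 (bigD1_seq (ring x) mL UL) [X in _ = X](bigD1_seq (ring x) mL UL) /=.
  rewrite filt_rcons Ey ALG_rcons -/jj /Msub_dist Evy.
  have -> : \sum_(i <- L | i != ring x) ALG_cost (Md i) (Ms i) (@algs i) (filt i (rcons t x))
          = \sum_(i <- L | i != ring x) ALG_cost (Md i) (Ms i) (@algs i) (filt i t).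
    by apply: eq_bigr => n /eqP Nn; rewrite filt_rcons sub_of_other.
  lra.
Qed.


Lemma Phi_ext z (Y1 Y2 : int -> T) : (forall n, Y1 n = Y2 n) -> Phi d s r z Y1 = Phi d s r z Y2.
Proof. by move=> H; have -> : Y1 = Y2 by apply: funext. Qed.

Lemma CC_ge0 : 0 <= CC r.
Proof. rewrite /CC; have := aa_gt0 r1; lra. Qed.

Let d_ge0 x y : 0 <= d x y. Proof. by case: dm. Qed.

Lemma potential (f : nat -> nat) (N : nat) (L : seq int) : uniq L ->
 forall t, (forall k, (k < size t)%N -> (f k < N)%N) -> (forall n, n \notin L -> filt n t = [::]) ->
 exists (cn : forall n, config (MS n)) (Cn : int -> R) (ep : int -> nat -> nat),
  [/\ forall n, reach (Md n) (Ms n) (filt n t) (cn n) (Cn n),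
      forall n i e, (ep n i < e)%N -> cn n (pickle (i, e)) = Ms n &
      \sum_(n <- L) Cn n + \sum_(i <- iota 0 N) Phi d s r (cfg f (init_config s) t i)
          (fun n => sval (cn n (pickle (i, ep n i)))) <= CC r * serve d f (init_config s) t].
Proof.
move=> UL; elim/last_ind => [|t x IH] Hf HL.
  exists (fun n => init_config (Ms n)), (fun _ => 0), (fun _ _ => 0%N); split.
  - by move=> n; exact: reach_nil.
  - by [].
  - rewrite /= big1 // big1 ?addr0 ?mulr0 // => i _.
    by rewrite /init_config (Phi_s s dm r1).
have Hf' : forall k, (k < size t)%N -> (f k < N)%N.
  by move=> k Hk; apply: Hf; rewrite size_rcons; apply: ltnW.
have HL' : forall n, n \notin L -> filt n t = [::].
  move=> n nL; have := HL n nL; rewrite filt_rcons.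
  by case: (sub_of n x) => [y|] // E; have := congr1 size E; rewrite size_rcons.
have [cn [Cn [ep [J1 J2 J3]]]] := IH Hf' HL'.
set c := cfg f (init_config s) t.
set i0 := f (size t).
have i0N : (i0 < N)%N by apply: Hf; rewrite size_rcons.
rewrite serve_rcons cfg_rcons -/c -/i0.
case: (pselect (x = s)) => [xs|xs].
  subst x; exists cn, Cn, ep.
  have Ef n : filt n (rcons t s) = filt n t by rewrite filt_rcons sub_of_s.
  split.
  - by move=> n; rewrite Ef.
  - exact: J2.
  - apply: le_trans (_ : \sum_(n <- L) Cn n + \sum_(i <- iota 0 N) Phi d s r (c i)
          (fun n => sval (cn n (pickle (i, ep n i)))) <= _).
      rewrite lerD2l; apply: ler_sum => i _; rewrite /move.
      case: (eqVneq i i0) => [->|Ni] //; rewrite (Phi_s s dm r1); exact: Phi_ge0.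
    apply: le_trans J3 _; rewrite mulrDr lerDl; apply: mulr_ge0; [exact: CC_ge0 | exact: d_ge0].
have [y Ey] := sub_of_ring xs.
have [Evy _] := sub_of_val Ey.
set m := ring x.
rewrite -/m in Ey.
pose Y := fun n => sval (cn n (pickle (i0, ep n i0))).
pose rs := fun n => if sub_of n x is Some _ then (rho d s x < d (Y n) x) else false.
pose ep' := fun n i => if i == i0 then (ep n i + rs n)%N else ep n i.
pose idx := fun n => pickle (i0, ep' n i0).
exists (fun n => match sub_of n x with Some yn => move (cn n) (idx n) yn | None => cn n end).
exists (fun n => Cn n + match sub_of n x with Some yn => Md n (cn n (idx n)) yn | None => 0 end).
exists ep'.
split.
- move=> n; rewrite filt_rcons; case E: (sub_of n x) => [yn|]; last by rewrite addr0.
  exact: reach_rcons.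
- move=> n i e He; case E: (sub_of n x) => [yn|].
    rewrite /move pickle_eq.
    case: (eqVneq (i, e) (i0, ep' n i0)) => [[Ei Ee]|Ne].
      by move: He; rewrite Ei Ee ltnn.
    apply: J2; apply: leq_ltn_trans He; rewrite /ep'; case: (i == i0) => //; exact: leq_addr.
  apply: J2; move: He; rewrite /ep' /rs E; case: (i == i0) => //; by rewrite addn0.
-
  have mL : m \in L.
    apply/negPn/negP => nL; have := HL _ nL; rewrite filt_rcons Ey.
    by move=> E; have := congr1 size E; rewrite size_rcons.
  set pay := Md m (cn m (idx m)) y.
  have Epay : pay = Num.min (d (Y m) x) (rho d s x).
    rewrite /pay /Msub_dist Evy /idx /ep' eqxx /rs Ey.
    case: (ltrP (rho d s x) (d (Y m) x)) => H.
      by rewrite addn1 J2 //=.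
    by rewrite addn0.
  have Esum : \sum_(n <- L) (Cn n + match sub_of n x with Some yn => Md n (cn n (idx n)) yn | None => 0 end)
      = \sum_(n <- L) Cn n + pay.
    rewrite big_split /= [X in _ + X = _](bigD1_seq m mL UL) /= Ey.
    rewrite (_ : \sum_(i <- L | i != m) _ = 0) ?addr0 //.
    by apply: big1 => n Nn; rewrite sub_of_other //; apply/eqP.
  rewrite Esum.
  have i0I : i0 \in iota 0 N by rewrite mem_iota add0n.
  have UI : uniq (iota 0 N) := iota_uniq 0 N.
  rewrite (bigD1_seq i0 i0I UI) /= in J3.
  rewrite (bigD1_seq i0 i0I UI) /=.
  rewrite /move eqxx.
  have Erest : \sum_(i <- iota 0 N | i != i0) Phi d s r (if i == i0 then x else c i)
      (fun n => sval (match sub_of n x with Some yn => move (cn n) (idx n) yn | None => cn n end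
                 (pickle (i, ep' n i))))
    = \sum_(i <- iota 0 N | i != i0) Phi d s r (c i) (fun n => sval (cn n (pickle (i, ep n i)))).
    apply: eq_bigr => i Ni; rewrite (negbTE Ni); apply: Phi_ext => n.
    rewrite /ep' (negbTE Ni); case: (sub_of n x) => [yn|] //.
    rewrite /move /idx pickle_eq.
    have -> : ((i, ep n i) == (i0, ep' n i0)) = false.
      by apply/negbTE; apply: contra Ni => /eqP [->].
    by [].
  rewrite Erest.
  have E0 : Phi d s r x (fun n => sval (match sub_of n x with Some yn => move (cn n) (idx n) yn | None => cn n end
                 (pickle (i0, ep' n i0))))
          = Phi d s r x (fun n => if n == m then x else Y n).
    apply: Phi_ext => n; case: (eqVneq n m) => [En|Nn].
      rewrite En Ey /move /idx eqxx //.
    by rewrite sub_of_other; [rewrite /ep' eqxx /rs sub_of_other ?addn0 //; apply/eqP | apply/eqP].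
  rewrite E0.
  have K := core dm r1 (c i0) Y xs; rewrite -/m -Epay in K.
  rewrite -/Y in J3.
  move: K J3; set A := \sum_(i <- _ | _) _; set B := \sum_(n <- L) Cn n.
  rewrite mulrDr; lra.
Qed.

End Decomp.

Unset Implicit Arguments. Set Strict Implicit.

Lemma serve_zero (R : realType) (U : Type) (dU : U -> U -> R) f c t :
  (forall a b, dU a b = 0) -> serve dU f c t = 0.
Proof. by move=> H; elim: t f c => [|p t IH] f c //=; rewrite H IH addr0. Qed.

Lemma filt_nil (R : realType) (T : Type) (d : T -> T -> R) (s : T) (r : R)
  (dm : is_metric d) (r1 : 1 < r) (sg : seq T) n :
  n \notin undup (map (ringof d s r) sg) -> filt s dm r1 n sg = [::].
Proof.
elim: sg => [|x sg IH]; first by [].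
rewrite mem_undup map_cons in_cons negb_or => /andP [Nx Ns].
rewrite /filt /= (sub_of_other dm r1 (n := n) (x := x)); last by apply/eqP.
by apply: IH; rewrite mem_undup.
Qed.

Lemma le_sum_iota (f : nat -> nat) n k : (k < n)%N -> (f k <= \sum_(j <- iota 0 n) f j)%N.
Proof.
move=> Hk; have kI : k \in iota 0 n by rewrite mem_iota add0n.
by rewrite (bigD1_seq k kI (iota_uniq 0 n)) /= leq_addr.
Qed.

Theorem theorem10 (R : realType) (T : Type) (d : T -> T -> R) (s : T) (r rho : R) :
  is_metric d -> 1 < r ->
  (forall n : int,
      admits_strictly_competitive (Msub_dist d s r n) (Msub_src d s r n) rho) ->
  admits_strictly_competitive d s ((4 * r - 1) / (r - 1) * rho).
Proof.
move=> dm r1 H.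
pose algs n := proj1_sig (cid (H n)).
have Halg n : strictly_competitive (Msub_dist d s r n) (Msub_src d s r n) (algs n) rho
  := proj2_sig (cid (H n)).
have d_ge0 x y : 0 <= d x y by case: dm.
have Md_ge0 n (a b : Msub d s r n) : 0 <= Msub_dist d s r n a b by exact: d_ge0.
exists (comb dm r1 algs) => sg.
rewrite CCE //.
have CCp : 0 < CC r by rewrite /CC; have := aa_gt0 r1; lra.
case: (lerP 0 rho) => Hrho; last first.
  have Ts : forall x, x = s.
    move=> x; case: (pselect (x = s)) => // xs; exfalso.
    have [y Ey] := sub_of_ring dm r1 xs.
    have [Evy _] := sub_of_val Ey.
    have K := Halg (ringof d s r x) [:: y].
    have O := OPT_ge0 (Md_ge0 (ringof d s r x)) (Msub_src d s r (ringof d s r x)) [:: y].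
    move: K; rewrite /ALG_cost /= addr0 => K.
    have Ek : Msub_dist d s r (ringof d s r x) (init_config (Msub_src d s r (ringof d s r x)) (algs (ringof d s r x) (take 1 [:: y]))) y = d s x.
      by rewrite /Msub_dist /= Evy.
    rewrite Ek in K.
    have Rx : 0 < d s x := rho_gt0 dm xs.
    have : rho * OPT_cost (Msub_dist d s r (ringof d s r x)) (Msub_src d s r (ringof d s r x)) [:: y] <= 0.
      by apply: mulr_le0_ge0 => //; exact: ltW.
    lra.
  have d0 : forall a b, d a b = 0.
    by move=> a b; rewrite (Ts a) (Ts b); case: dm => _ [E _]; apply: (proj2 (E s s)).
  rewrite /ALG_cost serve_zero //.
  have -> : OPT_cost d s sg = 0.
    apply/eqP; rewrite eq_le OPT_ge0 // andbT.
    apply: le_trans (_ : serve d (fun _ => 0%N) (init_config s) sg <= 0).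
      apply: OPT_le_reach => //; exists (fun _ => 0%N); split; reflexivity.
    by rewrite serve_zero.
  by rewrite !mulr0.
set L := undup (map (ringof d s r) sg).
have UL : uniq L := undup_uniq _.
have HL : forall n, n \notin L -> filt s dm r1 n sg = [::] by move=> n; exact: filt_nil.
have [_ _ Ealg] := decomp algs UL HL.
rewrite Ealg.
set SO := \sum_(n <- L) OPT_cost (Msub_dist d s r n) (Msub_src d s r n) (filt s dm r1 n sg).
have Step1 : \sum_(n <- L) ALG_cost (Msub_dist d s r n) (Msub_src d s r n) (algs n) (filt s dm r1 n sg)
    <= rho * SO.
  rewrite /SO mulr_sumr; apply: ler_sum => n _; exact: Halg.
have Step2 : SO / CC r <= OPT_cost d s sg.
  apply: OPT_ge => f.
  set N := (\sum_(j <- iota 0 (size sg)) f j).+1.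
  have Hf : forall k, (k < size sg)%N -> (f k < N)%N.
    by move=> k Hk; rewrite ltnS; exact: le_sum_iota.
  have [cn [Cn [ep [J1 _ J3]]]] := potential UL Hf HL.
  have S1 : SO <= \sum_(n <- L) Cn n.
    by apply: ler_sum => n _; exact: OPT_le_reach (Md_ge0 n) _ _ _ _ (J1 n).
  have S2 : 0 <= \sum_(i <- iota 0 N) Phi d s r (cfg f (init_config s) sg i)
          (fun n => sval (cn n (pickle (i, ep n i)))).
    by apply: sumr_ge0 => i _; exact: Phi_ge0.
  rewrite ler_pdivrMr // mulrC; lra.
have Step3 : SO <= CC r * OPT_cost d s sg.
  by rewrite -ler_pdivrMl // mulrC.
apply: le_trans Step1 _.
have -> : CC r * rho * OPT_cost d s sg = rho * (CC r * OPT_cost d s sg) by ring.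
by apply: ler_wpM2l.
Qed.
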